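(* Let $G$ and $G_0$ be connected graphs such that $G$ is a cactus and $G_0$ is a subgraph of $G$ that is either a cactus or a cycle. Then there exist sequences $(P_1,\dots,P_r)$ and $(G_0,G_1,\dots,G_r)$ of subgraphs of $G$ ($r\ge 0$, with $r=0$ iff $G=G_0$) such that $G_r=G$, every $G_i$ with $i\ge1$ is a cactus, and for every $i\in\{1,\dots,r\}$: $G_i=G_{i-1}\cup P_i$ with $E(P_i)\cap E(G_{i-1})=\emptyset$, where $P_i$ is a path, a cycle, or a lollipop, and (p) if $P_i$ is a path then $V(G_{i-1})\cap V(P_i)=End(P_i)$; (l) if $P_i$ is a lollipop then $V(G_{i-1})\cap V(P_i)=End(P_i)$; (c) if $P_i$ is a cycle then $|V(G_{i-1})\cap V(P_i)|=1$. Consequently $G_{i-1}$ is a proper subgraph of $G_i$ and $\Delta G_i-\Delta G_{i-1}=1$ for all $i$.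
   Context: Graphs are finite, may have loops and parallel edges, and have no isolated vertices unless stated otherwise. A leaf is a vertex incident to exactly one edge, which is not a loop. $\Delta G=|E(G)|-|V(G)|$. A cycle is a connected graph all of whose vertices have degree 2 (a loop contributes 2; a single vertex with a loop is a cycle). An $(x,y)$-path is a path with distinct end vertices $x,y$ and at least one edge, and $End(P)=\{x,y\}$. A lollipop is a graph obtained from a cycle $C$ (possibly a loop) and a vertex-disjoint path $P$ with end vertices $y,x$ by identifying a vertex of $C$ with $y$; its end-vertex is $x$, and $End(Q)=\{x\}$. A cacti-graph is a graph with no isolated vertices, no leaves, and no component that is a cycle (equivalently, no isolated vertices, no leaves, and every component contains at least two cycles). A cactus is a connected cacti-graph (this is not the standard meaning of ''cactus''). *)

(* Defs.v *)
(* Finite multigraphs (loops and parallel edges allowed).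
   An ambient multigraph is given by a vertex type T : finType, an edge type
   ET : finType and an endpoint map ends : ET -> T * T (unordered: an edge e
   joins u and v iff ends e = (u,v) or (v,u); it is a loop iff both ends are
   equal). *)
From HB Require Import structures.
From mathcomp Require Import all_boot.
Set Implicit Arguments. Unset Strict Implicit. Unset Printing Implicit Defensive.

Section Graphs.
Variables (T ET : finType) (ends : ET -> T * T).

Definition graph := ({set T} * {set ET})%type.
Definition gV (H : graph) : {set T} := H.1.
Definition gE (H : graph) : {set ET} := H.2.

Definition is_graph (H : graph) : Prop :=
  forall e, e \in gE H -> ((ends e).1 \in gV H) /\ ((ends e).2 \in gV H).

Definition subgraph (H G : graph) : Prop :=
  is_graph H /\ gV H \subset gV G /\ gE H \subset gE G.

Definition gunion (A B : graph) : graph := (gV A :|: gV B, gE A :|: gE B).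

Definition joins (e : ET) (u v : T) : bool :=
  (ends e == (u, v)) || (ends e == (v, u)).

(* degree; a loop contributes 2 *)
Definition deg (H : graph) (v : T) : nat :=
  \sum_(e in gE H) (((ends e).1 == v) + ((ends e).2 == v)).

Definition adj (H : graph) : rel T :=
  fun u v => [exists e in gE H, joins e u v].

Definition connected (H : graph) : Prop :=
  is_graph H /\ gV H != set0 /\
  forall u v, u \in gV H -> v \in gV H -> connect (adj H) u v.

Definition is_cycle (H : graph) : Prop :=
  connected H /\ forall v, v \in gV H -> deg H v = 2.

(* (x,y)-path: distinct vertices v_0 = x, ..., v_k = y (k >= 1) and distinct
   edges e_1..e_k with e_i joining v_{i-1} and v_i; H consists exactly of them *)
Definition is_path (H : graph) (x y : T) : Prop :=
  exists (vs : seq T) (es : seq ET),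
    [/\ uniq vs, uniq es, size vs = (size es).+1 & 0 < size es] /\
    [/\ head x vs = x, last x vs = y,
        all (fun t => joins t.1 t.2.1 t.2.2) (zip es (zip vs (behead vs))),
        gV H = [set v in vs] & gE H = [set e in es]].

Definition is_lollipop (H : graph) (x : T) : Prop :=
  exists (C P : graph) (y : T),
    [/\ is_cycle C, is_path P y x, gV C :&: gV P = [set y],
        gE C :&: gE P = set0 & H = gunion C P].

Definition isolated (H : graph) (v : T) : bool := deg H v == 0.
(* exactly one incident edge, not a loop  <=>  degree 1 *)
Definition leaf (H : graph) (v : T) : bool := deg H v == 1.

Definition component (H : graph) (v : T) : graph :=
  let S := [set u in gV H | connect (adj H) v u] in
  (S, [set e in gE H | ((ends e).1 \in S) && ((ends e).2 \in S)]).

Definition cacti_graph (H : graph) : Prop :=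
  [/\ is_graph H,
      (forall v, v \in gV H -> ~~ isolated H v),
      (forall v, v \in gV H -> ~~ leaf H v) &
      (forall v, v \in gV H -> ~ is_cycle (component H v))].

Definition cactus (H : graph) : Prop := connected H /\ cacti_graph H.

End Graphs.

(* Main.v *)
Require Import Defs.
From HB Require Import structures.
From mathcomp Require Import all_boot.
From mathcomp Require Import zify.
Set Implicit Arguments. Unset Strict Implicit. Unset Printing Implicit Defensive.

Section Aux.
Variables (T ET : finType) (ends : ET -> T * T).

Definition inc (e : ET) (v : T) : nat := (((ends e).1 == v) + ((ends e).2 == v))%N.
Definition J (t : ET * (T * T)) : bool := joins ends t.1 t.2.1 t.2.2.

Lemma degE (H : graph T ET) v : deg ends H v = \sum_(e in gE H) inc e v.
Proof. by []. Qed.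

Lemma joins_sym e u v : joins ends e u v = joins ends e v u.
Proof. by rewrite /joins orbC. Qed.

Lemma inc_joins e a b v : joins ends e a b -> inc e v = ((a == v) + (b == v))%N.
Proof. by rewrite /inc /joins => /orP [] /eqP ->; rewrite //= addnC. Qed.

Lemma sum_trail v : forall es p1 p2, size es = size p1 -> size p1 = size p2 ->
  all J (zip es (zip p1 p2)) ->
  \sum_(e <- es) inc e v = (count (pred1 v) p1 + count (pred1 v) p2)%N.
Proof.
elim=> [|e es IH] [|a p1] [|b p2] //=; first by rewrite big_nil.
move=> [s1] [s2] /andP [Je Ha]; rewrite big_cons (IH p1 p2) // (inc_joins v Je).
rewrite /=; lia.
Qed.

Lemma deg_seq (P : graph T ET) es v : uniq es -> gE P = [set e in es] ->
  deg ends P v = \sum_(e <- es) inc e v.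
Proof.
move=> ue hE; rewrite degE hE big_uniq //; apply: eq_bigl => e; by rewrite inE.
Qed.

Lemma deg_mono (A B : graph T ET) v : gE A \subset gE B -> deg ends A v <= deg ends B v.
Proof.
move=> sAB; rewrite !degE [X in X <= _]big_mkcond [X in _ <= X]big_mkcond /=.
apply: leq_sum => e _; case: ifP => // eA; by rewrite (subsetP sAB e eA).
Qed.

Lemma sum_eq1 (a : T) : \sum_(v : T) ((a == v) : nat) = 1.
Proof.
rewrite (bigD1 a) //= eqxx big1 // => v; by rewrite eq_sym => /negbTE ->.
Qed.

Lemma handshake (H : graph T ET) : \sum_(v : T) deg ends H v = 2 * #|gE H|.
Proof.
rewrite (eq_bigr (fun v => \sum_(e in gE H) inc e v)) //.
rewrite exchange_big /= (eq_bigr (fun _ => 2)).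
  by rewrite sum_nat_const mulnC.
move=> e _; rewrite /inc big_split /= !sum_eq1 //.
Qed.

Lemma hs_low (H : graph T ET) : (forall v, v \in gV H -> 1 < deg ends H v) ->
  #|gV H| <= #|gE H|.
Proof.
move=> hd; rewrite -(leq_pmul2l (isT : 0 < 2)) -handshake.
apply: (@leq_trans (\sum_(v in gV H) deg ends H v)).
  rewrite -sum1_card big_distrr /=; apply: leq_sum => v /hd; by rewrite muln1.
rewrite [X in X <= _]big_mkcond /=; apply: leq_sum => v _; by case: ifP.
Qed.

Lemma deg_out (H : graph T ET) v : is_graph ends H -> v \notin gV H -> deg ends H v = 0.
Proof.
move=> gH vH; rewrite degE big1 // => e /gH [h1 h2]; rewrite /inc.
by case: eqP h1 => [->|]; [rewrite (negbTE vH)| case: eqP h2 => [->|];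
  [rewrite (negbTE vH)|]].
Qed.

Lemma hs_cyc (H : graph T ET) : is_graph ends H -> (forall v, v \in gV H -> deg ends H v = 2) ->
  #|gE H| = #|gV H|.
Proof.
move=> gH hd; apply/eqP; rewrite -(eqn_pmul2l (isT : 0 < 2)) -handshake.
rewrite (bigID (fun v => v \in gV H)) /= [X in _ + X]big1; last first.
  by move=> v vH; rewrite deg_out.
rewrite addn0 -sum1_card big_distrr /=; apply/eqP; apply: eq_bigr => v /hd ->.
by rewrite muln1.
Qed.


Lemma adj_sym (P : graph T ET) : symmetric (adj ends P).
Proof.
move=> u v; apply/existsP/existsP => -[e /andP [h1 h2]]; exists e;
  by rewrite h1 joins_sym.
Qed.

Lemma path_adj (P : graph T ET) t : forall s es x, {subset es <= gE P} ->
  size s <= size es -> all J (zip es (zip (x :: s) (s ++ t))) -> path (adj ends P) x s.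
Proof.
elim=> [|y s IH] [|e es] x //= sub sz /andP [Je Ha].
rewrite (IH es y) //; last by move=> f fi; apply: sub; rewrite inE fi orbT.
rewrite andbT; apply/existsP; exists e; rewrite /J /= in Je; rewrite Je andbT; apply: sub; exact: mem_head.
Qed.

Lemma trail_mem : forall es (p1 p2 : seq T) e, all J (zip es (zip p1 p2)) ->
  size es <= size p1 -> size es <= size p2 -> e \in es ->
  exists a b, [/\ joins ends e a b, a \in p1 & b \in p2].
Proof.
elim=> [|f es IH] [|a p1] [|b p2] e //= /andP [Jf Ha] s1 s2.
rewrite inE => /orP [/eqP ->|ei].
  by exists a, b; rewrite /J /= in Jf; rewrite Jf !mem_head.
have [a' [b' [h1 h2 h3]]] := IH p1 p2 e Ha s1 s2 ei.
by exists a', b'; rewrite h1 !inE h2 h3 !orbT.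
Qed.

Lemma zip_belast (x : T) s : zip (x :: s) s = zip (belast x s) s.
Proof. elim: s x => [|y s IH] x //=; by rewrite IH. Qed.

Lemma joins_ends e a b : joins ends e a b -> ((ends e).1 == a) || ((ends e).1 == b).
Proof. by rewrite /joins => /orP [] /eqP ->; rewrite eqxx ?orbT. Qed.
Lemma joins_ends2 e a b : joins ends e a b -> ((ends e).2 == a) || ((ends e).2 == b).
Proof. by rewrite /joins => /orP [] /eqP ->; rewrite eqxx ?orbT. Qed.

Lemma graph_seq (P : graph T ET) es p1 p2 (S : seq T) :
  gE P = [set e in es] -> all J (zip es (zip p1 p2)) ->
  size es <= size p1 -> size es <= size p2 -> {subset p1 <= S} -> {subset p2 <= S} ->
  gV P = [set v in S] -> is_graph ends P.
Proof.
move=> hE hJ s1 s2 sub1 sub2 hV e; rewrite hE inE hV !inE => ei.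
have [a [b [jab ap bp]]] := trail_mem hJ s1 s2 ei.
have aS := sub1 _ ap; have bS := sub2 _ bp.
by split; [case/orP: (joins_ends jab) | case/orP: (joins_ends2 jab)] => /eqP ->.
Qed.

Lemma conn_seq (P : graph T ET) x s : is_graph ends P -> gV P = [set v in x :: s] ->
  path (adj ends P) x s -> connected ends P.
Proof.
move=> gP hV hp; split => //; split.
  by apply/set0Pn; exists x; rewrite hV inE mem_head.
move=> u v; rewrite hV !inE => hu hv.
have cu := path_connect hp hu; have cv := path_connect hp hv.
apply: connect_trans cv; by rewrite (sym_connect_sym (@adj_sym P)).
Qed.

Lemma count_pos (v : T) s : v \in s -> 0 < count (pred1 v) s.
Proof. by rewrite -has_count has_pred1. Qed.

Lemma path_facts (P : graph T ET) x y : is_path ends P x y ->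
  [/\ x != y, #|gV P| = (#|gE P|).+1, connected ends P, x \in gV P /\
      y \in gV P & forall v, v \in gV P -> v != x -> v != y -> 1 < deg ends P v].
Proof.
move=> [vs [es [[uvs ues szv szes] [hh hl hJ hV hE]]]].
case: vs uvs szv hh hl hJ hV => [|x0 s] //= uvs [szv] hx; subst x0 => hl hJ hV.
have xy : x != y.
  case: s uvs szv hl {hJ hV} => [|b s] //=; first by move=> _ sz; move: szes; rewrite -sz.
  move=> /andP [xn _] _ <-; apply/eqP => hxl; move: xn; rewrite hxl.
  by rewrite (mem_last b s).
have gP : is_graph ends P.
  apply: (graph_seq (S := x :: s) hE hJ) => //; rewrite /= ?szv ?leqnSn //.
  by move=> v vs; rewrite inE vs orbT.
split => //.
- have c1 : #|x :: s| = size (x :: s) by apply/card_uniqP.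
  have c2 : #|es| = size es by apply/card_uniqP.
  rewrite hV hE !cardsE c1 c2.
  by rewrite /= szv.
- apply: (conn_seq gP hV); apply: (@path_adj _ [::] s es x); first by move=> e; rewrite hE inE.
    by rewrite szv.
  by rewrite cats0.
- rewrite hV !inE eqxx; split=> //; by rewrite -hl -in_cons mem_last.
move=> v; rewrite hV inE in_cons => /orP [/eqP ->|vs]; first by rewrite eqxx.
move=> _ vy.
rewrite (deg_seq v ues hE) zip_belast in hJ *.
rewrite (sum_trail v (p1 := belast x s) (p2 := s)) ?size_belast //.
have vb : v \in belast x s.
  have : v \in x :: s by rewrite inE vs orbT.
  by rewrite lastI mem_rcons in_cons hl (negbTE vy).
have := count_pos vb; have := count_pos vs; lia.
Qed.

Lemma closed_trail (C : graph T ET) cs gs : uniq cs -> cs != [::] -> uniq gs ->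
  size gs = size cs -> all J (zip gs (zip cs (rot 1 cs))) ->
  gV C = [set v in cs] -> gE C = [set e in gs] -> is_cycle ends C.
Proof.
case: cs => [|c s] // ucs _ ugs sz hJ hV hE.
have gC : is_graph ends C.
  apply: (graph_seq hE hJ (S := c :: s)) => //; rewrite ?size_rot ?sz //.
  by move=> v; rewrite mem_rot.
split.
  apply: (conn_seq gC hV); apply: (@path_adj _ [:: c] s gs c).
  - by move=> e; rewrite hE inE.
  - by rewrite sz.
  by rewrite cats1 -rot1_cons.
move=> v; rewrite hV inE => vc.
rewrite (deg_seq v ugs hE) (sum_trail v (p1 := c :: s) (p2 := rot 1 (c :: s))) ?size_rot //.
have hp : perm_eq (rot 1 (c :: s)) (c :: s) by rewrite perm_rot.
rewrite -(permP hp) count_uniq_mem //.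
  by rewrite mem_rot vc. by rewrite rot_uniq.
Qed.


Definition ear (H P : graph T ET) : Prop :=
  (exists x y, is_path ends P x y /\ gV H :&: gV P = [set x; y])
  \/ (exists x, is_lollipop ends P x /\ gV H :&: gV P = [set x])
  \/ (is_cycle ends P /\ #|gV H :&: gV P| = 1).

Lemma cyc_card (C : graph T ET) : is_cycle ends C -> #|gE C| = #|gV C|.
Proof. by move=> [[gC _] hd]; apply: hs_cyc. Qed.

Lemma lift_conn (A B : graph T ET) x z : gE A \subset gE B ->
  connect (adj ends A) x z -> connect (adj ends B) x z.
Proof.
move=> sAB; apply: connect_sub => u w /existsP [e /andP [eA j]].
apply: connect1; apply/existsP; exists e; by rewrite (subsetP sAB e eA).
Qed.

Lemma union_conn (A B : graph T ET) : connected ends A -> connected ends B ->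
  gV A :&: gV B != set0 -> connected ends (gunion A B).
Proof.
move=> [gA [nA cA]] [gB [nB cB]] /set0Pn [y]; rewrite inE => /andP [yA yB].
have gU : is_graph ends (gunion A B).
  move=> e; rewrite !inE => /orP [/gA|/gB] [h1 h2]; by rewrite h1 h2 ?orbT.
split=> //; split; first by apply/set0Pn; exists y; rewrite !inE yA.
have cy : forall u, u \in gV (gunion A B) -> connect (adj ends (gunion A B)) y u.
  move=> u; rewrite !inE => /orP [uA|uB].
    by apply: (@lift_conn A); [exact: subsetUl | exact: cA].
  by apply: (@lift_conn B); [exact: subsetUr | exact: cB].
move=> u v hu hv; apply: connect_trans (cy v hv).
by rewrite (sym_connect_sym (@adj_sym _)) cy.
Qed.

Lemma gE_union (A B : graph T ET) : gE (gunion A B) = gE A :|: gE B.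
Proof. by []. Qed.
Lemma gV_union (A B : graph T ET) : gV (gunion A B) = gV A :|: gV B.
Proof. by []. Qed.

Lemma lolli_facts (P : graph T ET) x : is_lollipop ends P x ->
  [/\ #|gE P| = #|gV P|, connected ends P, x \in gV P &
      forall v, v \in gV P -> v != x -> 1 < deg ends P v].
Proof.
move=> [C [Pp [y [cC pP hV hE ->]]]].
have [_ cPp cP [yP xP] dP] := path_facts pP.
have eC := cyc_card cC.
have yC : y \in gV C.
  have : y \in gV C :&: gV Pp by rewrite hV inE.
  by rewrite inE => /andP [].
have h1 := cardsUI (gE C) (gE Pp); rewrite hE cards0 in h1.
have h2 := cardsUI (gV C) (gV Pp); rewrite hV cards1 in h2.
split.
- rewrite gE_union gV_union; lia.
- apply: union_conn => //; first by case: cC.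
  by rewrite hV; apply/set0Pn; exists y; rewrite inE.
- by rewrite gV_union inE xP orbT.
move=> v; rewrite gV_union inE => /orP [vC|vP] vx.
  have := @deg_mono C (gunion C Pp) v (subsetUl _ _).
  by case: cC => _ /(_ v vC) ->.
case: (boolP (v \in gV C)) => vC.
  have := @deg_mono C (gunion C Pp) v (subsetUl _ _).
  by case: cC => _ /(_ v vC) ->.
have vy : v != y by apply: contraNneq vC => ->.
have := @deg_mono Pp (gunion C Pp) v (subsetUr _ _).
by apply: leq_trans; apply: dP.
Qed.

Lemma ear_facts (H P : graph T ET) : ear H P ->
  [/\ connected ends P, gV H :&: gV P != set0,
      #|gE P| + #|gV H :&: gV P| = (#|gV P|).+1 &
      forall v, v \in gV P -> v \notin gV H -> 1 < deg ends P v].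
Proof.
case=> [[x [y [pP hI]]]|[[x [lP hI]]|[cP hI]]].
- have [xy cV cP [xP yP] dP] := path_facts pP.
  split => //.
  + by rewrite hI; apply/set0Pn; exists x; rewrite !inE eqxx.
  + by rewrite hI cards2 xy cV; lia.
  move=> v vP vH; apply: dP => //.
    apply: contraNneq vH => ->; have : x \in gV H :&: gV P by rewrite hI !inE eqxx.
    by rewrite inE => /andP [].
  apply: contraNneq vH => ->; have : y \in gV H :&: gV P by rewrite hI !inE eqxx orbT.
  by rewrite inE => /andP [].
- have [eP cP xP dP] := lolli_facts lP.
  split => //.
  + by rewrite hI; apply/set0Pn; exists x; rewrite !inE.
  + by rewrite hI cards1 eP addn1.
  move=> v vP vH; apply: dP => //.
  apply: contraNneq vH => ->; have : x \in gV H :&: gV P by rewrite hI !inE.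
  by rewrite inE => /andP [].
- split.
  + by case: cP.
  + by apply/set0Pn; apply/card_gt0P; rewrite hI.
  + by rewrite hI cyc_card // addn1.
  by move=> v vP _; case: cP => _ /(_ v vP) ->.
Qed.

Lemma union_count (H P : graph T ET) : ear H P -> gE P :&: gE H = set0 ->
  #|gE (gunion H P)| + #|gV H| = (#|gE H| + #|gV (gunion H P)|).+1.
Proof.
move=> /ear_facts [_ _ hc _] hd.
have h1 := cardsUI (gE H) (gE P); rewrite setIC hd cards0 in h1.
have h2 := cardsUI (gV H) (gV P).
rewrite gE_union gV_union; lia.
Qed.

Lemma union_deg (H P : graph T ET) : (forall v, v \in gV H -> 1 < deg ends H v) ->
  ear H P -> forall v, v \in gV (gunion H P) -> 1 < deg ends (gunion H P) v.
Proof.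
move=> dH /ear_facts [_ _ _ dP] v; rewrite gV_union inE.
case: (boolP (v \in gV H)) => vH /= vP.
  by apply: leq_trans (dH v vH) (@deg_mono H (gunion H P) v (subsetUl _ _)).
by apply: leq_trans (dP v vP vH) (@deg_mono P (gunion H P) v (subsetUr _ _)).
Qed.

Lemma comp_full (K : graph T ET) v : connected ends K -> v \in gV K -> component ends K v = K.
Proof.
case: K => VK EK [gK [_ cK]] vK.
have hS : [set u in VK | connect (adj ends (VK, EK)) v u] = VK.
  apply/setP => u; rewrite inE; case: (boolP (u \in VK)) => //= uK; exact: cK.
rewrite /component /= hS; congr pair; apply/setP => e; rewrite inE.
case: (boolP (e \in EK)) => //= eK; have [h1 h2] := gK e eK; by rewrite h1 h2.
Qed.

Lemma cactus_of (K : graph T ET) : connected ends K ->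
  (forall v, v \in gV K -> 1 < deg ends K v) -> #|gV K| < #|gE K| -> cactus ends K.
Proof.
move=> cK dK lt; split => //; split; first by case: cK.
- by move=> v /dK; rewrite /isolated; case: (deg _ _ _).
- by move=> v /dK; rewrite /leaf; case: (deg _ _ _) => [|[]].
move=> v vK; rewrite comp_full // => /cyc_card; lia.
Qed.

Definition inv (G H : graph T ET) : Prop :=
  [/\ subgraph ends H G, connected ends H & forall v, v \in gV H -> 1 < deg ends H v].

Lemma inv_step (G H P : graph T ET) : inv G H -> ear H P -> is_graph ends G ->
  gE P \subset gE G -> gE P :&: gE H = set0 ->
  [/\ inv G (gunion H P), cactus ends (gunion H P), subgraph ends P G &
      #|gE (gunion H P)| + #|gV H| = (#|gE H| + #|gV (gunion H P)|).+1].
Proof.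
move=> [[gH [sVH sEH]] cH dH] eHP gG sEP dis.
have cnt := union_count eHP dis.
have [cP nI _ dP] := ear_facts eHP.
have cU : connected ends (gunion H P).
  by apply: union_conn.
have dU := union_deg dH eHP.
have sP : subgraph ends P G.
  split; first by case: cP.
  split => //; apply/subsetP => v vP.
  case: (boolP (v \in gV H)) => vH; first exact: (subsetP sVH).
  have := dP v vP vH; rewrite degE.
  case: (boolP [exists e in gE P, inc e v != 0]).
    move=> /existsP [e /andP [eP ne]]; have [h1 h2] := gG e (subsetP sEP e eP).
    have : ((ends e).1 == v) || ((ends e).2 == v) by move: ne; rewrite /inc; case: ((ends e).1 == v); case: ((ends e).2 == v).
    by case/orP => /eqP <-.
  move=> /existsPn hn; rewrite big1 // => e eP; move: (hn e); rewrite eP /=.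
  by move/negPn/eqP.
have lH := hs_low dH.
split => //.
- split => //; split; first by case: cU.
  split; apply/subsetP => x; rewrite !inE => /orP [h|h].
  + exact: (subsetP sVH).
  + by case: sP => _ [/subsetP ->].
  + exact: (subsetP sEH).
  + exact: (subsetP sEP).
- apply: cactus_of => //; lia.
Qed.

Lemma split_mem (x : T) s : x \in s -> exists c d, s = c ++ x :: d.
Proof.
elim: s => [|y s IH] //; rewrite in_cons => /orP [/eqP ->|xs].
  by exists [::], s.
by have [c [d ->]] := IH xs; exists (y :: c), d.
Qed.

Lemma zip_split (c d : seq T) z :
  zip (c ++ z :: d) (behead (c ++ z :: d)) = zip c (behead (rcons c z)) ++ zip (z :: d) d.
Proof.
case: c => [|x c] //=.
by rewrite -cats1 -zip_cat ?size_cat ?addn1 // -catA.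
Qed.

Lemma zip_rot (c : seq T) z :
  zip (z :: c) (rot 1 (z :: c)) = (z, head z c) :: zip c (behead (rcons c z)).
Proof. by rewrite rot1_cons; case: c. Qed.

Lemma head_split (y z : T) c d : head y (c ++ z :: d) = head z c.
Proof. by case: c. Qed.

Lemma end_in2 (A : {set T}) e a b : joins ends e a b -> (ends e).1 \in A -> (ends e).2 \in A ->
  a \in A /\ b \in A.
Proof. by rewrite /joins => /orP [] /eqP -> /= h1 h2. Qed.

Lemma exit_path (A : {set T}) (r : rel T) x p : path r x p -> x \in A -> last x p \notin A ->
  exists a b, [/\ a \in A, b \notin A & r a b].
Proof.
elim: p x => [|y p IH] x /=; first by move=> _ ->.
move=> /andP [rxy hp] xA; case: (boolP (y \in A)) => yA.
  exact: IH.
by move=> _; exists x, y.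
Qed.

Lemma edges_ok (G H : graph T ET) (gs : seq ET) : {subset gs <= gE G} ->
  (forall e, e \in gs -> e \notin gE H) ->
  [set e in gs] \subset gE G /\ [set e in gs] :&: gE H = set0.
Proof.
move=> s1 s2; split.
  by apply/subsetP => e; rewrite inE => /s1.
apply/setP => e; rewrite !inE; case: (boolP (e \in gs)) => //= /s2; exact: negbTE.
Qed.

Lemma sub_step (N M n : nat) : N - M <= n.+1 -> N - M.+1 <= n.
Proof. lia. Qed.

Lemma walk (G H : graph T ET) u : is_graph ends G -> is_graph ends H ->
  (forall v, v \in gV G -> 1 < deg ends G v) -> u \in gV H ->
  forall n a q1 es, #|T| - size q1 <= n ->
  uniq (a :: q1) -> uniq es -> size es = size q1 -> all J (zip es (zip (a :: q1) q1)) ->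
  {subset es <= gE G} -> (forall e, e \in es -> e \notin gE H) ->
  (forall v, v \in a :: q1 -> v \in gV H -> v = u) -> last a q1 = u -> a \notin gV H ->
  exists P, [/\ ear H P, gE P \subset gE G & gE P :&: gE H = set0].
Proof.
move=> gG gH dG uH n; elim: n => [|n IH] a q1 es hn uq ues sz hJ sG nH hVu hl aH.
  have : size (a :: q1) <= #|T|.
    have c1 : #|a :: q1| = size (a :: q1) by apply/card_uniqP.
    by rewrite -c1 max_card.
  move: hn => /=; lia.
have q1n : q1 != [::].
  by apply: contraNneq aH => q0; move: hl; rewrite q0 /= => ->.
have uq1 : u \in a :: q1 by rewrite -hl mem_last.
have aG : a \in gV G.
  case: q1 q1n sz hJ {hl hVu uq uq1 hn} => [|b q1] // _; case: es sG {ues nH} => [|e1 es] // sG _.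
  rewrite /= => /andP [j1 _]; have [h1 h2] := gG e1 (sG e1 (mem_head _ _)).
  by have [] := end_in2 j1 h1 h2.
have hJ' := hJ; rewrite zip_belast in hJ'.
have s1 : \sum_(e <- es) inc e a = 1.
  rewrite (sum_trail a (p1 := belast a q1) (p2 := q1)) ?size_belast //.
  case: q1 q1n uq {sz hJ hJ' hl hVu uq1 hn} => [|b q1] //= _ /andP [aq _].
  rewrite eqxx.
  have /count_memPn -> : a \notin belast b q1.
    by apply: contra aq => /mem_belast.
  by have /count_memPn := aq; rewrite /= => ->.
have [f [fG fes fa]] : exists f, [/\ f \in gE G, f \notin es & inc f a != 0].
  case: (boolP [exists f, [&& f \in gE G, f \notin es & inc f a != 0]]).
    by move=> /existsP [f /and3P [h1 h2 h3]]; exists f.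
  move=> /existsPn hn'; have := dG a aG; rewrite degE (bigID (fun e => e \in es)) /=.
  rewrite [X in _ + X]big1; last first.
    by move=> e /andP [eG ees]; move: (hn' e); rewrite eG ees /= => /negPn/eqP.
  rewrite addn0 (eq_bigl (fun e => e \in es)); last first.
    by move=> e; case: (boolP (e \in es)) => [/sG ->|]; rewrite ?andbF.
  by rewrite -big_uniq // s1.
set z := if (ends f).1 == a then (ends f).2 else (ends f).1.
have jf : joins ends f z a.
  rewrite /z /joins; case: (boolP ((ends f).1 == a)) => e1.
    by apply/orP; right; apply/eqP; move/eqP: e1 => <-; rewrite -surjective_pairing.
  have e2 : (ends f).2 == a by move: fa e1; rewrite /inc; case: ((ends f).1 == a); case: ((ends f).2 == a).
  by apply/orP; left; apply/eqP; move/eqP: e2 => <-; rewrite -surjective_pairing.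
have fH : f \notin gE H.
  apply/negP => /gH [h1 h2].
  have : ((ends f).1 == a) || ((ends f).2 == a).
    by move: fa; rewrite /inc; case: ((ends f).1 == a); case: ((ends f).2 == a).
  by case/orP => /eqP e; [move: h1 | move: h2]; rewrite e (negbTE aH).
have sG' : {subset f :: es <= gE G} by move=> e; rewrite in_cons => /orP [/eqP ->|/sG].
have nH' : forall e, e \in f :: es -> e \notin gE H.
  by move=> e; rewrite in_cons => /orP [/eqP ->|/nH].
have ufes : uniq (f :: es) by rewrite /= fes.
case: (boolP (z \in gV H)) => zH.
  have zu : z \in a :: q1 -> z = u by move=> /hVu; apply.
  case: (eqVneq z u) => [ezu|nzu].
  -
    pose cs := u :: belast a q1.
    have rcs : rot 1 cs = a :: q1 by rewrite /cs rot1_cons -hl -lastI.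
    have [eG eH] := @edges_ok G H (f :: es) sG' nH'.
    exists ([set v in cs], [set e in f :: es]); split => //.
    right; right; split.
      apply: (@closed_trail _ cs (f :: es)) => //.
      + by rewrite -(rot_uniq 1) rcs.
      + by rewrite /= size_belast sz.
      + rewrite rcs /cs /= hJ' andbT; rewrite -ezu; exact: jf.
    have -> : gV H :&: gV ([set v in cs], [set e in f :: es]) = [set u].
      apply/setP => v; rewrite in_setI /gV /= !in_set -(mem_rot 1) rcs in_set1.
      by apply/andP/eqP => [[h1 h2]|->]; [exact: hVu | split].
    by rewrite cards1.
  -
    have zq : z \notin a :: q1 by apply/negP => /zu; apply/eqP.
    have [eG eH] := @edges_ok G H (f :: es) sG' nH'.
    exists ([set v in z :: a :: q1], [set e in f :: es]); split => //.
    left; exists z, u; split.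
      exists (z :: a :: q1), (f :: es); split; split => //.
      + by rewrite cons_uniq zq uq.
      + by rewrite /= sz.
      + by rewrite /= hJ andbT.
    apply/setP => v; rewrite in_setI /gV /= in_set in_set2 in_cons.
    case: (eqVneq v z) => [->|vz] /=; first by rewrite zH.
    by apply/andP/eqP => [[h1 h2]|->]; [exact: hVu | split].
case: (boolP (z \in a :: q1)) => zq.
  have [c [d Hq]] := split_mem zq.
  have szq : size q1 = size c + size d.
    by have := congr1 size Hq; rewrite size_cat /= addnS => -[].
  have hce : size c <= size es by rewrite sz szq leq_addr.
  set es1 := take (size c) es; set es2 := drop (size c) es.
  have hes : es = es1 ++ es2 by rewrite cat_take_drop.
  have s1' : size es1 = size c by rewrite size_takel.
  have s2' : size es2 = size d by rewrite size_drop sz szq addKn.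
  have hJ2 : all J (zip es1 (zip c (behead (rcons c z)))) && all J (zip es2 (zip (z :: d) d)).
    have hq1 : q1 = behead (c ++ z :: d) by rewrite -Hq.
    move: hJ; rewrite {2}hq1 Hq zip_split {1}hes zip_cat ?all_cat //.
    by rewrite size_zip size_behead size_rcons /= minnn.
  move/andP: hJ2 => [hJc hJd].
  have uq' := uq; rewrite Hq cat_uniq in uq'; case/and3P: uq' => uc hcd uzd.
  have zc : z \notin c.
    by apply: contra hcd => zc; apply/hasP; exists z => //; exact: mem_head.
  have ues' := ues; rewrite hes cat_uniq in ues'; case/and3P: ues' => ue1 he12 ue2.
  have hlast : last z d = u.
    have : last z (a :: q1) = u by [].
    by rewrite Hq last_cat.
  have dn : d != [::].
    by apply: contraNneq zH => d0; move: hlast; rewrite d0 /= => ->.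
  have hz : head z c = a by rewrite -(head_split a z c d) -Hq.
  have m1 : forall e, e \in es1 -> e \in es by move=> e; exact: mem_take.
  have m2 : forall e, e \in es2 -> e \in es by move=> e; exact: mem_drop.
  pose C := ([set v in z :: c], [set e in f :: es1]) : graph T ET.
  pose Pp := ([set v in z :: d], [set e in es2]) : graph T ET.
  exists (gunion C Pp); split.
  - right; left; exists u; split.
      exists C, Pp, z; split => //.
      + apply: (@closed_trail _ (z :: c) (f :: es1)) => //.
        * by rewrite /= zc uc.
        * by rewrite /= ue1 andbT; apply: contra fes; exact: m1.
        * by rewrite /= s1'.
        * by rewrite zip_rot /= hz hJc andbT.
      + exists (z :: d), es2; split; split => //.
        * by rewrite /= s2'.
        * by rewrite s2' lt0n size_eq0.
      + apply/setP => v; rewrite in_setI /gV /= !in_set in_set1 !in_cons.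
        case: (eqVneq v z) => //= vz; apply/negP => /andP [vc vd].
        by move/negP: hcd; apply; apply/hasP; exists v; rewrite ?in_cons ?vd ?orbT.
      + apply/setP => e; rewrite in_setI /gE /= !in_set ?in_set0 in_cons.
        case: (boolP (e \in es2)) => e2; rewrite ?andbF //= andbT.
        apply/negP => /orP [/eqP ef|e1].
          by move: fes; rewrite -ef (m2 e e2).
        by move/negP: he12; apply; apply/hasP; exists e.
    apply/setP => v; rewrite in_setI gV_union in_setU /gV /= !in_set in_set1.
    have -> : (v \in z :: c) || (v \in z :: d) = (v \in a :: q1).
      by rewrite Hq mem_cat !in_cons; case: (v == z); case: (v \in c).
    by apply/andP/eqP => [[h1 h2]|->]; [exact: hVu | split].
  - apply/subsetP => e; rewrite gE_union in_setU /gE /= !in_set => /orP [h|h]; apply: sG'.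
      by move: h; rewrite !in_cons => /orP [->|/m1 ->]; rewrite ?orbT.
    by rewrite in_cons (m2 e h) orbT.
  - apply/setP => e; rewrite in_setI gE_union in_setU /gE /= !in_set ?in_set0.
    case: (boolP (e \in gE H)) => eH; rewrite ?andbF // andbT.
    apply/negP => hh; have hin : e \in f :: es.
      case/orP: hh => h; last by rewrite in_cons (m2 e h) orbT.
      by move: h; rewrite !in_cons => /orP [->|/m1 ->]; rewrite ?orbT.
    by move: (nH' e hin); rewrite eH.
apply: (IH z (a :: q1) (f :: es)) => //.
- exact: sub_step hn.
- by rewrite /= zq.
- by rewrite /= sz.
- by apply/andP; split.
- by move=> v; rewrite in_cons => /orP [/eqP -> /(negP zH)|]; [|exact: hVu].
Qed.

Lemma step (G H : graph T ET) : inv G H -> connected ends G ->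
  (forall v, v \in gV G -> 1 < deg ends G v) -> H <> G ->
  exists P, [/\ ear H P, gE P \subset gE G & gE P :&: gE H = set0].
Proof.
move=> [[gH [sVH sEH]] [_ [nH cH]] dH] [gG [nG cG]] dG neq.
have [e [u [w [eG eH uH jw]]]] : exists e u w,
    [/\ e \in gE G, e \notin gE H, u \in gV H & joins ends e u w].
  case: (boolP (gV G \subset gV H)) => sub.
    have eV : gV H = gV G by apply/eqP; rewrite eqEsubset sVH sub.
    case: (boolP (gE G \subset gE H)) => subE.
      have eE : gE H = gE G by apply/eqP; rewrite eqEsubset sEH subE.
      exfalso; apply: neq; move: eV eE; rewrite /gV /gE => eV eE.
      by rewrite [H]surjective_pairing [G]surjective_pairing eV eE.
    have [e eG eH] := subsetPn subE.
    exists e, (ends e).1, (ends e).2; split => //.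
      by rewrite eV; case: (gG e eG).
    by rewrite /joins -surjective_pairing eqxx.
  have [t tG tH] := subsetPn sub; have /set0Pn [x xH] := nH.
  have := cG x t (subsetP sVH x xH) tG; case/connectP => p hp ht.
  have [a [b [aH bH ab]]] := exit_path hp xH (etrans (congr1 (fun y => y \notin gV H) (esym ht)) tH).
  case/existsP: ab => e /andP [eG jab]; exists e, a, b; split => //.
  apply/negP => /gH [h1 h2]; have [_ bH'] := end_in2 jab h1 h2.
  by rewrite bH' in bH.
have [sG nH'] : [set x in [:: e]] \subset gE G /\ [set x in [:: e]] :&: gE H = set0.
  by apply: edges_ok => x; rewrite inE => /eqP ->.
case: (boolP (w \in gV H)) => wH.
  case: (eqVneq w u) => [ewu|nwu].
  - exists ([set v in [:: u]], [set x in [:: e]]); split => //.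
    right; right; split.
      apply: (@closed_trail _ [:: u] [:: e]) => //.
      by rewrite /= andbT -{2}ewu.
    have -> : gV H :&: gV ([set v in [:: u]], [set x in [:: e]]) = [set u].
      apply/setP => v; rewrite in_setI /gV /= in_set in_set1 in_cons in_nil orbF.
      by case: (eqVneq v u) => [->|]; rewrite ?uH ?andbF.
    by rewrite cards1.
  - exists ([set v in [:: u; w]], [set x in [:: e]]); split => //.
    left; exists u, w; split.
      exists [:: u; w], [:: e]; split; split => //.
      + by rewrite /= inE eq_sym nwu.
      + by rewrite /= andbT.
    apply/setP => v; rewrite in_setI /gV /= in_set in_set2 !in_cons in_nil orbF.
    by case: (eqVneq v u) => [->|] /=; [rewrite uH | case: (eqVneq v w) => [->|]; rewrite ?wH ?andbF].
have wu : w != u by apply: contraNneq wH => ->.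
apply: (walk gG gH dG uH (n := #|T|) (a := w) (q1 := [:: u]) (es := [:: e])) => //.
- exact: leq_subr.
- by rewrite /= inE wu.
- by rewrite /= andbT; rewrite /J /= joins_sym.
- by move=> x; rewrite inE => /eqP ->.
- by move=> x; rewrite inE => /eqP ->.
- move=> v; rewrite !inE => /orP [/eqP ->|/eqP -> //]; by rewrite (negbTE wH).
Qed.

Lemma card_dec (a b b' v v' : nat) : b' + v = (b + v').+1 -> v <= v' -> b' <= a ->
  a - b' < a - b.
Proof. lia. Qed.

Lemma iterate (G : graph T ET) : is_graph ends G -> connected ends G ->
  (forall v, v \in gV G -> 1 < deg ends G v) -> forall n H, #|gE G :\: gE H| < n -> inv G H ->
  exists (r : nat) (P Gs : nat -> graph T ET),
    [/\ Gs 0 = H, Gs r = G, (r = 0 <-> G = H),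
        (forall i, i <= r -> subgraph ends (Gs i) G) &
        (forall i, 1 <= i <= r ->
           [/\ subgraph ends (P i) G,
               cactus ends (Gs i),
               Gs i = gunion (Gs i.-1) (P i) &
               gE (P i) :&: gE (Gs i.-1) = set0] /\
           [/\ ear (Gs i.-1) (P i),
               (gV (Gs i.-1) \subset gV (Gs i) /\ gE (Gs i.-1) \subset gE (Gs i)
                /\ Gs i.-1 <> Gs i) &
               #|gE (Gs i)| + #|gV (Gs i.-1)| = (#|gE (Gs i.-1)| + #|gV (Gs i)|).+1])].
Proof.
move=> gG cG dG; elim=> [|n IH] H // hn hinv.
case: (eqVneq H G) => [->|neq].
  exists 0, (fun _ => G), (fun _ => G); split => //.
  by move=> i /andP [h1 h2]; move: (leq_trans h1 h2).
have neq' : H <> G by move=> h; rewrite h eqxx in neq.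
have [P [eP sP dP]] := step hinv cG dG neq'.
have [hinv' cU sPG cnt] := inv_step hinv eP gG sP dP.
set H' := gunion H P in hinv' cU cnt.
have hn' : #|gE G :\: gE H'| < n.
  case: hinv => [[_ [_ sEH]] _ _]; case: hinv' => [[_ [_ sEH']] _ _].
  rewrite !cardsD (setIidPr sEH) (setIidPr sEH') in hn *.
  apply: leq_trans _ (hn : _ <= n).
  apply: (card_dec cnt); first by apply: subset_leq_card; exact: subsetUl.
  exact: subset_leq_card.
have [r [P' [Gs' [h0 hr hr0 hsub hst]]]] := IH H' hn' hinv'.
exists r.+1, (fun i => if i == 1 then P else P' i.-1),
  (fun i => match i with 0 => H | j.+1 => Gs' j end); split => //.
- split => // h; by rewrite h eqxx in neq.
- case=> [_|j hj]; first by case: hinv.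
  exact: hsub.
case=> [//|[|j]] hj /=.
  rewrite h0; split; first by split.
  split => //.
    split; [exact: subsetUl | split; [exact: subsetUl|]].
    by move=> he; move: cnt; rewrite -he; lia.
exact: (hst j.+1).
Qed.
End Aux.

Theorem mainTheorem3 (T ET : finType) (ends : ET -> T * T)
    (G G0 : graph T ET) :
  connected ends G -> connected ends G0 ->
  cactus ends G -> subgraph ends G0 G ->
  (cactus ends G0 \/ is_cycle ends G0) ->
  exists (r : nat) (P Gs : nat -> graph T ET),
    [/\ Gs 0 = G0, Gs r = G, (r = 0 <-> G = G0),
        (forall i, i <= r -> subgraph ends (Gs i) G) &
        (forall i, 1 <= i <= r ->
           [/\ subgraph ends (P i) G,
               cactus ends (Gs i),
               Gs i = gunion (Gs i.-1) (P i) &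
               gE (P i) :&: gE (Gs i.-1) = set0] /\
           [/\
               (exists x y, is_path ends (P i) x y /\
                    gV (Gs i.-1) :&: gV (P i) = [set x; y])
               \/ (exists x, is_lollipop ends (P i) x /\
                    gV (Gs i.-1) :&: gV (P i) = [set x])
               \/ (is_cycle ends (P i) /\
                    #|gV (Gs i.-1) :&: gV (P i)| = 1),
               (gV (Gs i.-1) \subset gV (Gs i) /\ gE (Gs i.-1) \subset gE (Gs i)
                /\ Gs i.-1 <> Gs i) &
               #|gE (Gs i)| + #|gV (Gs i.-1)| = (#|gE (Gs i.-1)| + #|gV (Gs i)|).+1])].
Proof.
move=> cG cG0 [_ [gG niso nleaf _]] [gG0 [sV sE]] h0.
have dG : forall v, v \in gV G -> 1 < deg ends G v.
  move=> v vG; have := niso v vG; have := nleaf v vG; rewrite /isolated /leaf.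
  by case: (deg _ _ _) => [|[]].
have hinv : inv ends G G0.
  split; [by split | by [] | move=> v vG0]. case: h0 => [[_ [_ ni nl _]]|[_ hd]]; last by rewrite hd.
  have := ni v vG0; have := nl v vG0; rewrite /isolated /leaf.
  by case: (deg _ _ _) => [|[]].
have [r [P [Gs [h1 h2 h3 h4 h5]]]] :=
  @iterate _ _ ends G gG cG dG (#|gE G :\: gE G0|).+1 G0 (leqnn _) hinv.
exists r, P, Gs; split => //.
Qed.
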